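(* Let $d\ge2$ and let $Q$ be a qplex. Then the preservation group $\mathcal{G}(Q)$ is a group under matrix multiplication, and it is the symmetry group of $Q$: for every $R\in\mathcal{G}(Q)$ the map $q\mapsto Rq$ is a distance-preserving bijection of $Q$ onto itself, and conversely every distance-preserving bijection $f:Q\to Q$ (with respect to the Euclidean distance) is of the form $f(q)=Rq$ for some $R\in\mathcal{G}(Q)$.
   Context: Fix an integer $d\ge 2$. $\langle\cdot,\cdot\rangle$ is the standard inner product on $\mathbb{R}^{d^2}$, $\|\cdot\|$ the Euclidean norm. $\Delta=\{p\in\mathbb{R}^{d^2}: p(i)\ge0,\ \sum_ip(i)=1\}$; $H=\{u\in\mathbb{R}^{d^2}:\sum_i u(i)=1\}$; $c=(1/d^2,\dots,1/d^2)$. For $A\subseteq H$ the polar is $A^*=\{u\in H:\langle u,v\rangle\ge\frac{1}{d(d+1)}\ \forall v\in A\}$. Out-ball $B_{\rm o}=\{u\in H:\|u-c\|\le r_{\rm o}\}$, $r_{\rm o}^2=\frac{d-1}{d^2(d+1)}$. A qplex is a set $Q\subseteq\Delta\cap B_{\rm o}$ with $Q^*=Q$. A measurement (with $d^2$ outcomes) is an array of reals $r(i|j)\ge0$ with $\sum_i r(i|j)=1$ for every $j$. For $q\in Q$, $q_r(i)=\sum_j\big[(d+1)q(j)-\frac1d\big]r(i|j)$ and $Q_r=\{q_r:q\in Q\}$; the measurement is $Q$-preserving if $Q_r=Q$. Its stretched measurement matrix is $R_{ij}=(d+1)r(i|j)-\frac1d\sum_k r(i|k)$, so that $q_r=Rq$.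 The preservation group $\mathcal{G}(Q)$ is the set of stretched measurement matrices of $Q$-preserving measurements. *)

(* Defs.v *)
(* Real numbers are modelled by an arbitrary real closed field R. *)
From HB Require Import structures.
From mathcomp Require Import all_boot all_order all_algebra.
Set Implicit Arguments. Unset Strict Implicit. Unset Printing Implicit Defensive.
Import Order.TTheory GRing.Theory Num.Theory.
Local Open Scope ring_scope.

Section QplexDefs.
Variables (R : rcfType) (d : nat).
Local Notation N := (d ^ 2)%N.
Local Notation vec := 'cV[R]_N.

Definition ip (u v : vec) : R := \sum_(i < N) u i 0 * v i 0.
Definition vnorm (u : vec) : R := Num.sqrt (ip u u).

Definition inH (u : vec) : Prop := \sum_(i < N) u i 0 = 1.
Definition inSimplex (u : vec) : Prop := (forall i, 0 <= u i 0) /\ inH u.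
Definition cvec : vec := const_mx (1 / (N%:R)).
Definition r_out : R := Num.sqrt ((d%:R - 1) / (d%:R ^+ 2 * (d%:R + 1))).
Definition inOutBall (u : vec) : Prop := inH u /\ vnorm (u - cvec) <= r_out.

Definition polar (A : vec -> Prop) (u : vec) : Prop :=
  inH u /\ forall v, A v -> 1 / (d%:R * (d%:R + 1)) <= ip u v.

Definition qplex (Q : vec -> Prop) : Prop :=
  (forall q, Q q -> inSimplex q /\ inOutBall q) /\
  (forall u, polar Q u <-> Q u).

(* r i j stands for r(i|j) *)
Definition measurement (r : 'M[R]_N) : Prop :=
  (forall i j, 0 <= r i j) /\ (forall j, \sum_(i < N) r i j = 1).

Definition qr (r : 'M[R]_N) (q : vec) : vec :=
  \col_i \sum_(j < N) ((d%:R + 1) * q j 0 - 1 / d%:R) * r i j.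

Definition Q_preserving (Q : vec -> Prop) (r : 'M[R]_N) : Prop :=
  measurement r /\
  (forall q, Q q -> Q (qr r q)) /\
  (forall p, Q p -> exists2 q, Q q & qr r q = p).

Definition stretched (r : 'M[R]_N) : 'M[R]_N :=
  \matrix_(i, j) ((d%:R + 1) * r i j - 1 / d%:R * \sum_(k < N) r i k).

Definition inPresGroup (Q : vec -> Prop) (M : 'M[R]_N) : Prop :=
  exists2 r, Q_preserving Q r & M = stretched r.

End QplexDefs.

(* Main.v *)
Require Import Defs.
From HB Require Import structures.
From mathcomp Require Import all_boot all_order all_algebra.
From mathcomp Require Import ring lra.
From Stdlib Require Import ClassicalEpsilon.
Import Order.TTheory GRing.Theory Num.Theory.
Local Open Scope ring_scope.
Set Implicit Arguments. Unset Strict Implicit. Unset Printing Implicit Defensive.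

Section Aux.
Variables (R : rcfType) (d : nat).
Hypothesis hd : (2 <= d)%N.
Local Notation N := (d ^ 2)%N.
Local Notation dr := (d%:R : R).

Lemma dr_gt0 : 0 < dr.
Proof. by rewrite ltr0n; case: d hd. Qed.
Lemma dr_neq0 : dr != 0. Proof. by rewrite gt_eqF // dr_gt0. Qed.
Lemma dr1_gt0 : 0 < dr + 1. Proof. by rewrite ltr_wpDr // dr_gt0. Qed.
Lemma dr1_neq0 : dr + 1 != 0. Proof. by rewrite gt_eqF // dr1_gt0. Qed.
Lemma NrE : (N%:R : R) = dr ^+ 2. Proof. by rewrite natrX. Qed.
Lemma Nr_neq0 : (N%:R : R) != 0. Proof. by rewrite NrE expf_neq0 // dr_neq0. Qed.
Lemma Nr_gt0 : (0 : R) < N%:R. Proof. by rewrite NrE exprn_gt0 // dr_gt0. Qed.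

Definition Jm : 'M[R]_N := const_mx 1.
Definition IJ (a b : R) : 'M[R]_N := a%:M + b *: Jm.

Lemma IJE a b i j : IJ a b i j = a *+ (i == j) + b.
Proof. by rewrite !mxE mulr1. Qed.

Lemma sum_delta (F : 'I_N -> R) j : \sum_i F i *+ (i == j) = F j.
Proof.
rewrite (bigD1 j) //= eqxx big1 ?addr0 // => i /negbTE ->; by rewrite mulr0n.
Qed.

Lemma mulJE (t : 'M[R]_N) i j : (t *m Jm) i j = \sum_k t i k.
Proof. rewrite !mxE; apply: eq_bigr => k _; by rewrite mxE mulr1. Qed.

Lemma mulIJ (t : 'M[R]_N) a b : t *m IJ a b = a *: t + b *: (t *m Jm).
Proof. by rewrite /IJ mulmxDr mul_mx_scalar scalemxAr. Qed.

Lemma mulIJE (t : 'M[R]_N) a b i j : (t *m IJ a b) i j = a * t i j + b * \sum_k t i k.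
Proof. rewrite mulIJ !mxE; congr (_ + _ * _); apply: eq_bigr => k _; by rewrite mxE mulr1. Qed.

Lemma JJ : Jm *m Jm = N%:R *: Jm.
Proof.
apply/matrixP => i j; rewrite mulJE !mxE.
under eq_bigr do rewrite mxE.
by rewrite sumr_const card_ord mulr1.
Qed.

Lemma sumIJ a b i : \sum_k IJ a b i k = a + b * N%:R.
Proof.
under eq_bigr do rewrite IJE.
rewrite big_split /= sumr_const card_ord -[b *+ _]mulr_natr.
rewrite (eq_bigr (fun k => a *+ (k == i))) ?sum_delta // => k _; by rewrite eq_sym.
Qed.

Lemma IJ_mul a b a' b' :
  IJ a b *m IJ a' b' = IJ (a * a') (a * b' + b * a' + b * b' * N%:R).
Proof.
apply/matrixP => i j; rewrite mulIJE sumIJ !IJE.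
case: (i == j); rewrite /= ?mulr1n ?mulr0n; ring.
Qed.

Lemma JIJ a b : Jm *m IJ a b = (a + b * N%:R) *: Jm.
Proof.
rewrite /IJ mulmxDr mul_mx_scalar -scalemxAr JJ scalerA scalerDl; congr (_ + _).
Qed.

Lemma IJ_eq a b a' b' : a = a' -> b = b' -> IJ a b = IJ a' b'.
Proof. by move=> -> ->. Qed.

Lemma IJ10 : IJ 1 0 = 1%:M.
Proof. by rewrite /IJ scale0r addr0. Qed.

End Aux.
Section Aux2.
Variables (R : rcfType) (d : nat).
Hypothesis hd : (2 <= d)%N.
Local Notation N := (d ^ 2)%N.
Local Notation dr := (d%:R : R).
Local Notation IJ := (@IJ R d).
Local Notation Jm := (@Jm R d).
Let h0 := dr_neq0 R hd.
Let h1 := dr1_neq0 R hd.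
Let hN := Nr_neq0 R hd.
Ltac fld := rewrite ?NrE; field; rewrite ?h0 ?h1 ?hN.

Definition Um := IJ (dr+1)^-1 ((dr+1)^-1 * dr^-1).
Definition Vm := IJ (dr+1) (- dr^-1).
Definition Pm := IJ 1 (- (N%:R)^-1).

Lemma UV : Um *m Vm = 1%:M.
Proof.
by rewrite IJ_mul -IJ10; apply: IJ_eq; fld.
Qed.

Lemma VU : Vm *m Um = 1%:M.
Proof.
by rewrite IJ_mul -IJ10; apply: IJ_eq; fld.
Qed.

Lemma stretchedV (t : 'M[R]_N) : stretched t = t *m Vm.
Proof. apply/matrixP => i j; rewrite mulIJE !mxE; ring. Qed.

Lemma stretchedU (t : 'M[R]_N) : stretched t *m Um = t.
Proof. by rewrite stretchedV -mulmxA VU mulmx1. Qed.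

Lemma stretched_of (W : 'M[R]_N) : stretched (W *m Um) = W.
Proof. by rewrite stretchedV -mulmxA UV mulmx1. Qed.

Lemma PP : Pm *m Pm = Pm.
Proof. rewrite IJ_mul; apply: IJ_eq; by fld. Qed.

Lemma JP : Jm *m Pm = 0.
Proof. by rewrite JIJ mulNr mulVf ?hN // subrr scale0r. Qed.

Lemma PT : Pm^T = Pm.
Proof. by apply/matrixP => i j; rewrite mxE !IJE eq_sym. Qed.

Lemma trP : \tr Pm = N%:R - 1.
Proof.
rewrite /Pm /IJ mxtraceD mxtrace_scalar mxtraceZ.
have -> : \tr Jm = N%:R.
  rewrite /mxtrace; under eq_bigr do rewrite mxE.
  by rewrite sumr_const card_ord.
by rewrite mulNr mulVf ?hN.
Qed.

Lemma VP : Vm *m Pm = IJ (dr + 1) (- ((dr + 1) / N%:R)).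
Proof. rewrite IJ_mul; apply: IJ_eq; by fld. Qed.

Definition colsum1 (t : 'M[R]_N) := forall j, \sum_i t i j = 1.

Lemma Jmul (t : 'M[R]_N) : colsum1 t -> Jm *m t = Jm.
Proof.
move=> ht; apply/matrixP => i j; rewrite !mxE -(ht j).
by apply: eq_bigr => k _; rewrite mxE mul1r.
Qed.

Lemma JV : Jm *m Vm = Jm.
Proof.
rewrite JIJ NrE.
have -> : dr + 1 + - dr^-1 * dr ^+ 2 = 1 by fld.
by rewrite scale1r.
Qed.

Lemma Jstretched (t : 'M[R]_N) : colsum1 t -> Jm *m stretched t = Jm.
Proof. by move=> ht; rewrite stretchedV mulmxA Jmul // JV. Qed.

Lemma PMP (M : 'M[R]_N) : Jm *m M = Jm -> Pm *m M *m Pm = M *m Pm.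
Proof.
move=> hM; rewrite /Pm /IJ mulmxDl mul_scalar_mx scale1r -scalemxAl hM.
by rewrite mulmxDl -scalemxAl JP scaler0 addr0.
Qed.

End Aux2.
Section Aux3.
Variables (R : rcfType) (d : nat).
Local Notation n := (d ^ 2)%N.
Local Notation vec := 'cV[R]_n.

Lemma ipE (u v : vec) : ip u v = (u^T *m v) 0 0.
Proof. by rewrite /ip !mxE; apply: eq_bigr => i _; rewrite mxE. Qed.

Lemma ipC (u v : vec) : ip u v = ip v u.
Proof. by apply: eq_bigr => i _; rewrite mulrC. Qed.

Lemma ipDl (u w v : vec) : ip (u + w) v = ip u v + ip w v.
Proof. rewrite /ip -big_split; apply: eq_bigr => i _; by rewrite mxE mulrDl. Qed.

Lemma ipNl (u v : vec) : ip (- u) v = - ip u v.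
Proof. rewrite /ip -sumrN; apply: eq_bigr => i _; by rewrite mxE mulNr. Qed.

Lemma ipBl (u w v : vec) : ip (u - w) v = ip u v - ip w v.
Proof. by rewrite ipDl ipNl. Qed.

Lemma ipBr (u w v : vec) : ip v (u - w) = ip v u - ip v w.
Proof. by rewrite ipC ipBl ipC [ip w v]ipC. Qed.

Lemma ipZl a (u v : vec) : ip (a *: u) v = a * ip u v.
Proof. rewrite /ip mulr_sumr; apply: eq_bigr => i _; by rewrite mxE mulrA. Qed.

Lemma ip_suml (I : finType) (F : I -> vec) v : ip (\sum_j F j) v = \sum_j ip (F j) v.
Proof.
rewrite /ip exchange_big /=; apply: eq_bigr => i _.
by rewrite summxE mulr_suml.
Qed.

Lemma ip_ge0 (u : vec) : 0 <= ip u u.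
Proof. apply: sumr_ge0 => i _; exact: mulr_ge0_le0 || by rewrite -expr2 sqr_ge0. Qed.

Lemma ip_eq0 (u : vec) : ip u u = 0 -> u = 0.
Proof.
move=> h; apply/colP => i; rewrite mxE.
have nn : forall k, predT k -> 0 <= u k 0 * u k 0 by move=> k _; rewrite -expr2 sqr_ge0.
have H := psumr_eq0P nn h.
by move/eqP: (H i isT); rewrite mulf_eq0 orbb => /eqP.
Qed.

Lemma ip_vnorm (u : vec) : ip u u = vnorm u ^+ 2.
Proof. by rewrite /vnorm sqr_sqrtr // ip_ge0. Qed.

Lemma col_mulmx m (A : 'M[R]_(m, n)) (B : 'M[R]_n) j : col j (A *m B) = A *m col j B.
Proof. apply/colP => i; rewrite !mxE; apply: eq_bigr => k _; by rewrite !mxE. Qed.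

Definition fro (A : 'M[R]_n) := \tr (A^T *m A).

Lemma froE (A : 'M[R]_n) : fro A = \sum_j \sum_i A i j ^+ 2.
Proof.
rewrite /fro /mxtrace; apply: eq_bigr => j _; rewrite mxE.
by apply: eq_bigr => i _; rewrite mxE expr2.
Qed.

Lemma fro_le0 (A : 'M[R]_n) : fro A <= 0 -> A = 0.
Proof.
rewrite froE => h.
have h0 : \sum_j \sum_i A i j ^+ 2 = 0.
  apply/le_anti; rewrite h /=; apply: sumr_ge0 => j _; apply: sumr_ge0 => i _; exact: sqr_ge0.
apply/matrixP => i j; rewrite mxE.
have nn1 : forall k, predT k -> 0 <= \sum_l A l k ^+ 2.
  by move=> k _; apply: sumr_ge0 => l _; exact: sqr_ge0.
have H := psumr_eq0P nn1 h0.
have nn2 : forall k, predT k -> 0 <= A k j ^+ 2 by move=> k _; exact: sqr_ge0.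
have H2 := psumr_eq0P nn2 (H j isT).
by move/eqP: (H2 i isT); rewrite sqrf_eq0 => /eqP.
Qed.

Lemma keyOrth (X Y P : 'M[R]_n) (m : R) :
  fro X <= m -> fro Y <= m -> X *m Y = P -> \tr P = m -> P^T = P ->
  P *m X = X -> X *m P = X -> X^T *m X = P.
Proof.
move=> hX hY hXY htr hPT hPX hXP.
have e1 : fro (X - Y^T) = fro X + fro Y - 2 * m.
  rewrite /fro; have -> : (X - Y^T)^T = X^T - Y by rewrite raddfB /= trmxK.
  rewrite mulmxBl !mulmxBr !raddfB /=.
  rewrite -trmx_mul mxtrace_tr [\tr (Y *m Y^T)]mxtrace_mulC [\tr (Y *m X)]mxtrace_mulC hXY htr.
  ring.
have eY : Y = X^T.
  have : X - Y^T = 0 by apply: fro_le0; rewrite e1; lra.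
  by move/eqP; rewrite subr_eq0 => /eqP ->; rewrite trmxK.
have XXt : X *m X^T = P by rewrite -eY.
have tXX : \tr (X^T *m X) = m by rewrite mxtrace_mulC XXt.
have PPe : P *m P = P by rewrite -{2}XXt mulmxA hPX.
have e2 : fro (X^T *m X - P) = 0.
  rewrite /fro; have -> : (X^T *m X - P)^T = X^T *m X - P by rewrite raddfB /= trmx_mul trmxK hPT.
  rewrite mulmxBl !mulmxBr !raddfB /=.
  have -> : X^T *m X *m (X^T *m X) = X^T *m X by rewrite mulmxA -(mulmxA _ X) XXt -mulmxA hPX.
  rewrite -mulmxA hXP PPe [\tr (P *m _)]mxtrace_mulC -mulmxA hXP tXX htr; ring.
by apply/eqP; rewrite -subr_eq0; apply/eqP; apply: fro_le0; rewrite e2.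
Qed.

End Aux3.
Section Aux4.
Variables (R : rcfType) (d : nat).
Hypothesis hd : (2 <= d)%N.
Local Notation N := (d ^ 2)%N.
Local Notation dr := (d%:R : R).
Local Notation IJ := (@IJ R d).
Local Notation Jm := (@Jm R d).
Let h0 := dr_neq0 R hd.
Let h1 := dr1_neq0 R hd.
Let hN := Nr_neq0 R hd.

Lemma sq_exp (x : 'I_N -> R) c :
  \sum_j (x j - c) ^+ 2 = \sum_j x j ^+ 2 - (\sum_j x j) * c *+ 2 + c ^+ 2 * N%:R.
Proof.
under eq_bigr do rewrite sqrrB.
by rewrite big_split /= sumrB sumr_const card_ord sumrMnl -mulr_suml mulr_natr.
Qed.

Lemma mean_le (x : 'I_N -> R) b :
  \sum_j (x j - (\sum_k x k) / N%:R) ^+ 2 <= \sum_j (x j - b) ^+ 2.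
Proof.
rewrite !sq_exp.
set S := \sum_k x k.
have hS : S = N%:R * (S / N%:R) by rewrite mulrC mulfVK.
move: (S / N%:R) hS => m ->.
rewrite -subr_ge0.
rewrite [X in _ <= X](_ : _ = N%:R * (m - b) ^+ 2); last by ring.
by rewrite mulr_ge0 ?sqr_ge0 // ler0n.
Qed.

End Aux4.
Section QS.
Variables (R : rcfType) (d : nat).
Hypothesis hd : (2 <= d)%N.
Variable Q : 'cV[R]_(d ^ 2) -> Prop.
Hypothesis hQ : qplex Q.
Local Notation N := (d ^ 2)%N.
Local Notation dr := (d%:R : R).
Local Notation IJ := (@IJ R d).
Local Notation Jm := (@Jm R d).
Local Notation Um := (@Um R d).
Local Notation Vm := (@Vm R d).
Local Notation Pm := (@Pm R d).
Let h0 := dr_neq0 R hd.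
Let h1 := dr1_neq0 R hd.
Let hN := Nr_neq0 R hd.
Ltac fld := rewrite ?NrE; field; rewrite ?h0 ?h1 ?hN ?andbT //.

Lemma Q_simplex q : Q q -> inSimplex q. Proof. by move=> h; case: (hQ.1 q h). Qed.
Lemma Q_H q : Q q -> inH q. Proof. by move=> h; case: (Q_simplex h). Qed.
Lemma Q_ball q : Q q -> inOutBall q. Proof. by move=> h; case: (hQ.1 q h). Qed.

Lemma IJq a b (q : 'cV[R]_N) j : (IJ a b *m q) j 0 = a * q j 0 + b * \sum_k q k 0.
Proof.
rewrite mxE; under eq_bigr do rewrite IJE mulrDl.
rewrite big_split /= -mulr_sumr; congr (_ + _).
rewrite (eq_bigr (fun k => (a * q k 0) *+ (k == j))) ?sum_delta // => k _.
by rewrite eq_sym mulrnAl.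
Qed.

Definition uv j : 'cV[R]_N := col j Um.

Lemma uvE j i : uv j i 0 = IJ (dr+1)^-1 ((dr+1)^-1 * dr^-1) j i.
Proof. by rewrite mxE !IJE eq_sym. Qed.

Lemma ip_uv j (v : 'cV[R]_N) : inH v -> ip (uv j) v = (dr+1)^-1 * v j 0 + (dr+1)^-1 * dr^-1.
Proof.
move=> hv; rewrite /ip; under eq_bigr do rewrite uvE.
have := IJq (dr+1)^-1 ((dr+1)^-1 * dr^-1) v j; rewrite mxE hv mulr1 => <-.
done.
Qed.

Lemma H_uv j : inH (uv j).
Proof.
rewrite /inH; under eq_bigr do rewrite uvE.
rewrite sumIJ; fld.
Qed.

Lemma Q_uv j : Q (uv j).
Proof.
apply/(proj2 hQ); split; first exact: H_uv.
move=> v Qv; rewrite ip_uv; last exact: Q_H.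
have -> : 1 / (dr * (dr + 1)) = (dr+1)^-1 * dr^-1 by fld.
rewrite lerDr; apply: mulr_ge0; first by rewrite invr_ge0 ltW // dr1_gt0.
by case: (Q_simplex Qv).
Qed.

Definition acoef (q : 'cV[R]_N) j := (dr + 1) * q j 0 - 1 / dr.

Lemma qr_str (t : 'M[R]_N) q : inH q -> qr t q = stretched t *m q.
Proof.
move=> hq; rewrite stretchedV -mulmxA; apply/colP => i.
rewrite !mxE; apply: eq_bigr => j _.
rewrite IJq hq mulr1 mulrC; congr (_ * _); fld.
Qed.

Lemma qr_col (t : 'M[R]_N) q : qr t q = \sum_j acoef q j *: col j t.
Proof. apply/colP => i; rewrite !mxE summxE; apply: eq_bigr => j _; by rewrite !mxE. Qed.

Lemma colU (t : 'M[R]_N) j : stretched t *m uv j = col j t.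
Proof. by rewrite /uv -col_mulmx stretchedU. Qed.

Lemma col_pres (t : 'M[R]_N) : (forall q, Q q -> Q (qr t q)) -> forall j, Q (col j t).
Proof. move=> ht j; rewrite -colU -qr_str; [exact: ht (Q_uv j) | exact: H_uv]. Qed.

Lemma meas_cols (t : 'M[R]_N) : (forall j, Q (col j t)) -> measurement t.
Proof.
move=> ht; split.
  by move=> i j; case: (Q_simplex (ht j)) => /(_ i); rewrite mxE.
move=> j; case: (Q_simplex (ht j)) => _; rewrite /inH => <-.
by apply: eq_bigr => i _; rewrite mxE.
Qed.

Lemma colsum_cols (t : 'M[R]_N) : (forall j, Q (col j t)) -> colsum1 t.
Proof. by move=> /meas_cols []. Qed.

Lemma rho_ge0 : 0 <= (dr - 1) / (dr ^+ 2 * (dr + 1)).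
Proof.
have h : 1 <= dr by rewrite ler1n; case: d hd.
by rewrite divr_ge0 ?subr_ge0 // mulr_ge0 ?sqr_ge0 // ltW // dr1_gt0.
Qed.

Lemma froB (t : 'M[R]_N) : (forall j, Q (col j t)) -> fro (stretched t *m Pm) <= N%:R - 1.
Proof.
move=> ht; rewrite stretchedV -mulmxA (VP R hd) froE.
have E : forall i j, (t *m IJ (dr + 1) (- ((dr + 1) / N%:R))) i j ^+ 2 =
   (dr + 1) ^+ 2 * (t i j - (\sum_k t i k) / N%:R) ^+ 2.
  by move=> i j; rewrite mulIJE; ring.
under eq_bigr do under eq_bigr do rewrite E.
set c := (dr + 1) ^+ 2.
have E2 : \sum_j \sum_i c * (t i j - (\sum_k t i k) / N%:R) ^+ 2 =
          c * \sum_j \sum_i (t i j - (\sum_k t i k) / N%:R) ^+ 2.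
  by rewrite mulr_sumr; apply: eq_bigr => j _; rewrite mulr_sumr.
rewrite E2.
set rho := (dr - 1) / (dr ^+ 2 * (dr + 1)).
have Hc : 0 <= c by rewrite sqr_ge0.
apply: (le_trans (y := c * (rho *+ N))); last first.
  rewrite le_eqVlt; apply/orP; left; apply/eqP.
  rewrite /c /rho -mulr_natr; fld.
apply: ler_wpM2l => //.
apply: (le_trans (y := \sum_j \sum_i (t i j - 1 / N%:R) ^+ 2)).
  rewrite exchange_big [X in _ <= X]exchange_big /=.
  apply: ler_sum => i _.
  exact: (mean_le hd (fun j => t i j)).
have -> : rho *+ N = \sum_(j < N) rho by rewrite sumr_const card_ord.
apply: ler_sum => j _.
case: (Q_ball (ht j)) => _.
rewrite /vnorm /r_out ler_sqrt; last exact: rho_ge0.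
apply: le_trans; rewrite le_eqVlt; apply/orP; left; apply/eqP.
rewrite /ip; apply: eq_bigr => i _; rewrite !mxE expr2.
done.
Qed.


Lemma matrix_cols (A B : 'M[R]_N) : (forall j, col j A = col j B) -> A = B.
Proof. by move=> h; apply/matrixP => i j; move/colP: (h j) => /(_ i); rewrite !mxE. Qed.

Lemma inv_ex r : Q_preserving Q r ->
  exists s : 'M[R]_N, (forall j, Q (col j s)) /\ stretched r *m stretched s = 1%:M.
Proof.
case=> hm [hin hon].
have sf : forall j, {q | Q q /\ qr r q = uv j}.
  move=> j; apply: constructive_indefinite_description.
  by case: (hon _ (Q_uv j)) => q Qq e; exists q.
pose s := \matrix_(i, j) (sval (sf j)) i 0.
have cs : forall j, col j s = sval (sf j) by move=> j; apply/colP => i; rewrite !mxE.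
have Qs : forall j, Q (col j s) by move=> j; rewrite cs; exact: (proj1 (svalP (sf j))).
exists s; split => //.
have rs : stretched r *m s = Um.
  apply: matrix_cols => j; rewrite col_mulmx cs -qr_str; last by apply: Q_H; exact: (proj1 (svalP (sf j))).
  exact: (proj2 (svalP (sf j))).
by rewrite (stretchedV s) mulmxA rs (UV R hd).
Qed.

Lemma ip00 : ip (0 : 'cV[R]_N) 0 = 0.
Proof. by rewrite /ip big1 // => i _; rewrite mxE mul0r. Qed.

Lemma Jv (v : 'cV[R]_N) : \sum_k v k 0 = 0 -> Pm *m v = v.
Proof.
move=> hv; apply/colP => i; rewrite IJq hv mulr0 addr0 mul1r //.
Qed.

Lemma iso_fwd r : Q_preserving Q r -> forall p q, Q p -> Q q ->
  vnorm (stretched r *m p - stretched r *m q) = vnorm (p - q).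
Proof.
move=> hr; case: (inv_ex hr) => s [Qs hrs].
case: hr => hm [hin hon].
set M := stretched r; set Ms := stretched s.
set X := M *m Pm; set Y := Ms *m Pm.
have JM : Jm *m M = Jm by apply: (Jstretched hd); case: hm.
have JMs : Jm *m Ms = Jm by apply: (Jstretched hd); exact: colsum_cols.
have XtX : X^T *m X = Pm.
  apply: (keyOrth (Y := Y) (m := N%:R - 1)).
  - by apply: froB; exact: col_pres.
  - by apply: froB.
  - by rewrite /X /Y mulmxA -(mulmxA M) -mulmxA (PMP hd JMs) mulmxA hrs mul1mx.
  - exact: (trP R hd).
  - exact: PT.
  - by rewrite /X mulmxA (PMP hd JM).
  - by rewrite /X -mulmxA (PP R hd).
move=> p q Qp Qq.
have hv : \sum_k (p - q) k 0 = 0.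
  under eq_bigr do rewrite !mxE.
  by rewrite sumrB (Q_H Qp) (Q_H Qq) subrr.
rewrite /vnorm; congr Num.sqrt.
rewrite -mulmxBr -{1 2}(Jv hv) mulmxA -/X !ipE trmx_mul mulmxA -(mulmxA _ X^T) XtX.
by rewrite -mulmxA (Jv hv).
Qed.

Lemma ip_polar (x y : 'cV[R]_N) : ip x y = (ip x x + ip y y - ip (x - y) (x - y)) / 2.
Proof. rewrite !ipBl !ipBr [ip y x]ipC; field; done. Qed.

Lemma ip_sum2 (a : 'I_N -> R) (w : 'I_N -> 'cV[R]_N) :
  ip (\sum_j a j *: w j) (\sum_k a k *: w k) = \sum_j \sum_k a j * a k * ip (w j) (w k).
Proof.
rewrite ip_suml; apply: eq_bigr => j _; rewrite ipZl ipC ip_suml mulr_sumr.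
by apply: eq_bigr => k _; rewrite ipZl ipC; ring.
Qed.

Lemma sum_acoef q : inH q -> \sum_j acoef q j = 1.
Proof.
move=> hq; rewrite /acoef sumrB -mulr_sumr hq sumr_const card_ord -mulr_natr mulr1; fld.
Qed.

Lemma affine_iso (f : 'cV[R]_N -> 'cV[R]_N) :
  (forall q, Q q -> Q (f q)) ->
  (forall p q, Q p -> Q q -> vnorm (f p - f q) = vnorm (p - q)) ->
  forall q, Q q -> f q = \sum_j acoef q j *: f (uv j).
Proof.
move=> fQ fiso q Qq.
have ipf : forall a b, Q a -> Q b -> ip (f a - f b) (f a - f b) = ip (a - b) (a - b).
  by move=> a b Qa Qb; rewrite !ip_vnorm fiso.
have sa := sum_acoef (Q_H Qq).
pose w j := f q - f (uv j).
pose z j := q - uv j.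
have wz : forall j k, ip (w j) (w k) = ip (z j) (z k).
  move=> j k; rewrite ip_polar [RHS]ip_polar.
  have -> : w j - w k = f (uv k) - f (uv j) by apply/colP => i; rewrite /w !mxE; ring.
  have -> : z j - z k = uv k - uv j by apply/colP => i; rewrite /z !mxE; ring.
  by rewrite /w /z !ipf //; exact: Q_uv.
have qU : \sum_j acoef q j *: uv j = q.
  have := qr_col Um q; rewrite qr_str; last exact: Q_H.
  have sU : stretched Um = 1%:M by have := stretched_of hd (1%:M : 'M[R]_N); rewrite mul1mx.
  by rewrite sU mul1mx => e; rewrite [RHS]e.
have sumz : \sum_j acoef q j *: z j = 0.
  rewrite /z; under eq_bigr do rewrite scalerBr.
  by rewrite sumrB -scaler_suml sa scale1r qU subrr.
have sumw : f q - \sum_j acoef q j *: f (uv j) = \sum_j acoef q j *: w j.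
  rewrite /w; under [RHS]eq_bigr do rewrite scalerBr.
  by rewrite sumrB -scaler_suml sa scale1r.
apply/eqP; rewrite -subr_eq0; apply/eqP; apply: ip_eq0.
rewrite sumw ip_sum2.
under eq_bigr do under eq_bigr do rewrite wz.
by rewrite -ip_sum2 sumz ip00.
Qed.


Lemma inG_of (M : 'M[R]_N) : (forall q, Q q -> Q (M *m q)) ->
  (forall p, Q p -> exists2 q, Q q & M *m q = p) -> inPresGroup Q M.
Proof.
move=> hin hon; exists (M *m Um); last by rewrite (stretched_of hd).
have cs : forall j, Q (col j (M *m Um)) by move=> j; rewrite col_mulmx; apply: hin; exact: Q_uv.
split; first exact: meas_cols.
split.
  by move=> q Qq; rewrite qr_str ?(stretched_of hd); [exact: hin | exact: Q_H].
move=> p Qp; case: (hon p Qp) => q Qq e; exists q => //.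
by rewrite qr_str ?(stretched_of hd) //; exact: Q_H.
Qed.

Lemma G_maps (M : 'M[R]_N) : inPresGroup Q M ->
  (forall q, Q q -> Q (M *m q)) /\ (forall p, Q p -> exists2 q, Q q & M *m q = p).
Proof.
case=> r [hm [hin hon]] ->; split.
  by move=> q Qq; rewrite -qr_str; [exact: hin | exact: Q_H].
move=> p Qp; case: (hon p Qp) => q Qq e; exists q => //.
rewrite -qr_str //; exact: Q_H.
Qed.

End QS.
Theorem mainTheorem13 (R : rcfType) (d : nat) (hd : (2 <= d)%N)
  (Q : 'cV[R]_(d ^ 2) -> Prop) (hQ : qplex Q) :
  (* G(Q) is a group under matrix multiplication *)
  (inPresGroup Q 1%:M /\
   (forall A B, inPresGroup Q A -> inPresGroup Q B -> inPresGroup Q (A *m B)) /\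
   (forall A, inPresGroup Q A ->
      exists2 B, inPresGroup Q B & A *m B = 1%:M /\ B *m A = 1%:M)) /\
  (* every element of G(Q) acts as a distance-preserving bijection of Q *)
  (forall M, inPresGroup Q M ->
     (forall q, Q q -> Q (M *m q)) /\
     (forall p q, Q p -> Q q -> M *m p = M *m q -> p = q) /\
     (forall p, Q p -> exists2 q, Q q & M *m q = p) /\
     (forall p q, Q p -> Q q -> vnorm (M *m p - M *m q) = vnorm (p - q))) /\
  (* every distance-preserving bijection of Q comes from G(Q) *)
  (forall f : 'cV[R]_(d ^ 2) -> 'cV[R]_(d ^ 2),
     (forall q, Q q -> Q (f q)) ->
     (forall p q, Q p -> Q q -> f p = f q -> p = q) ->
     (forall p, Q p -> exists2 q, Q q & f q = p) ->
     (forall p q, Q p -> Q q -> vnorm (f p - f q) = vnorm (p - q)) ->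
     exists2 M, inPresGroup Q M & forall q, Q q -> f q = M *m q).
Proof.
have inv : forall A, inPresGroup Q A ->
    exists2 B, inPresGroup Q B & A *m B = 1%:M /\ B *m A = 1%:M.
  move=> A hA; have [Ain Aon] := G_maps hd hQ hA.
  case: hA => r hr eA; case: (inv_ex hd hQ hr) => s [Qs hrs].
  rewrite -eA in hrs; have hsr := mulmx1C hrs.
  exists (stretched s) => //; apply: (inG_of hd hQ).
    move=> q Qq; case: (Aon q Qq) => p Qp <-; by rewrite mulmxA hsr mul1mx.
  move=> p Qp; exists (A *m p); first exact: Ain.
  by rewrite mulmxA hsr mul1mx.
split; [split; [|split] | split].
- by apply: (inG_of hd hQ) => [q Qq|p Qp]; [rewrite mul1mx | exists p; rewrite ?mul1mx].
- move=> A B hA hB; have [Ain Aon] := G_maps hd hQ hA; have [Bin Bon] := G_maps hd hQ hB.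
  apply: (inG_of hd hQ).
    by move=> q Qq; rewrite -mulmxA; apply: Ain; apply: Bin.
  move=> p Qp; case: (Aon p Qp) => q1 Q1 e1; case: (Bon q1 Q1) => q2 Q2 e2.
  by exists q2 => //; rewrite -mulmxA e2.
- exact: inv.
- move=> M hM; have [Min Mon] := G_maps hd hQ hM.
  split => //; split.
    move=> p q Qp Qq e; case: (inv M hM) => B _ [_ hBM].
    by rewrite -[p]mul1mx -hBM -mulmxA e mulmxA hBM mul1mx.
  split => //.
  case: hM => r hr ->; exact: (iso_fwd hd hQ hr).
move=> f fin finj fon fiso.
pose r := \matrix_(i, j) (f (uv R j)) i 0.
have cr : forall j, col j r = f (uv R j) by move=> j; apply/colP => i; rewrite !mxE.
have fM : forall q, Q q -> f q = stretched r *m q.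
  move=> q Qq; rewrite -(qr_str hd); last exact: (Q_H hQ).
  rewrite qr_col (affine_iso hd hQ fin fiso Qq).
  by apply: eq_bigr => j _; rewrite cr.
exists (stretched r) => //.
apply: (inG_of hd hQ).
  by move=> q Qq; rewrite -fM //; exact: fin.
move=> p Qp; case: (fon p Qp) => q Qq e; exists q => //; by rewrite -fM.
Qed.
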